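(* Let $\phi=\tilde p/p$ be an irreducible rational inner function on $\mathbb{D}^3$ of degree $(m,n,1)$ with $p(z)=p_1(z_1,z_2)+z_3p_2(z_1,z_2)$, $\tilde p(z)=z_3\tilde p_1(z_1,z_2)+\tilde p_2(z_1,z_2)$, and for $\lambda\in\mathbb{T}$ let $q_\lambda=\lambda p_1-\tilde p_2$. Let $(\tau_1,\tau_2)\in\mathbb{T}^2$. Then: (A) if $(\tau_1,\tau_2,\tau_3)\in\mathcal{Z}_p$ for exactly one $\tau_3\in\mathbb{T}$, then for $\lambda\in\mathbb{T}$, $\phi^*(\tau)=\lambda$ if and only if $q_\lambda(\tau_1,\tau_2)=0$ (here $\tau=(\tau_1,\tau_2,\tau_3')$ with any $\tau_3'\in\mathbb{T}$); (B) if $\{(\tau_1,\tau_2)\}\times\mathbb{T}\subseteq\mathcal{Z}_p$, then $q_\lambda(\tau_1,\tau_2)=0$ for every $\lambda\in\mathbb{T}$.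
   Context: A rational inner function (RIF) on $\mathbb{D}^3$ is a rational function holomorphic on the tridisk with unimodular radial limits a.e. on $\mathbb{T}^3$; it is written $\phi=\tilde p/p$ with $p$ zero-free on $\mathbb{D}^3$, $p,\tilde p$ without common factors. For degree $(m,n,1)$, $\tilde p(z)=z_1^mz_2^nz_3\overline{p(1/\bar z_1,1/\bar z_2,1/\bar z_3)}$ and $\tilde p_j(z_1,z_2)=z_1^mz_2^n\overline{p_j(1/\bar z_1,1/\bar z_2)}$. $\phi^*(\tau)$ denotes the nontangential limit of $\phi$ at $\tau\in\mathbb{T}^3$ (limit as $z\to\tau$ in $\mathbb{D}^3$ with $\|z-\tau\|\le C(1-\|z\|)$), which exists for every RIF at every point of $\mathbb{T}^3$; under the hypothesis of (A) it does not depend on the third coordinate of $\tau$. $\mathcal{Z}_p$ is the zero set of $p$. *)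

(* Defs.v *)
(* Polynomials in three
   variables are nested univariate polynomials:
     {poly {poly {poly C}}}  with the OUTER variable = z3, middle = z2,
                                  inner variable = z1;
   bivariate ones are {poly {poly C}} with outer = z2, inner = z1. *)
From mathcomp Require Import all_boot all_order all_algebra.
From mathcomp Require Import reals.
From mathcomp Require Export complex.
Set Implicit Arguments. Unset Strict Implicit. Unset Printing Implicit Defensive.
Import Order.TTheory GRing.Theory Num.Theory.
Local Open Scope ring_scope.

Notation poly2 R := {poly {poly (complex R)}}.
Notation poly3 R := {poly {poly {poly (complex R)}}}.

Section Defs.
Variable R : realType.
Local Notation C := R[i].

Definition nrm (z : C) : R := Normc.normc z.


Definition eval2 (P : poly2 R) (z1 z2 : C) : C := (P.[z2%:P]).[z1].
Definition eval3 (P : poly3 R) (z1 z2 z3 : C) : C :=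
  ((P.[(z3%:P)%:P]).[z2%:P]).[z1].

Definition deg_le2 (m n : nat) (P : poly2 R) : Prop :=
  (size P <= n.+1)%N /\ forall j, (size (P`_j)%R <= m.+1)%N.

Definition deg_le3 (m n k : nat) (P : poly3 R) : Prop :=
  (size P <= k.+1)%N /\ forall l, deg_le2 m n (P`_l).

Definition is_refl2 (m n : nat) (P Pt : poly2 R) : Prop :=
  forall z1 z2 : C, z1 != 0 -> z2 != 0 ->
    eval2 Pt z1 z2 =
      z1 ^+ m * z2 ^+ n * Num.conj (eval2 P (Num.conj z1)^-1 (Num.conj z2)^-1).

Definition is_refl3 (m n : nat) (P Pt : poly3 R) : Prop :=
  forall z1 z2 z3 : C, z1 != 0 -> z2 != 0 -> z3 != 0 ->
    eval3 Pt z1 z2 z3 =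
      z1 ^+ m * z2 ^+ n * z3 *
        Num.conj (eval3 P (Num.conj z1)^-1 (Num.conj z2)^-1 (Num.conj z3)^-1).

Definition divides3 (f P : poly3 R) : Prop := exists g : poly3 R, P = f * g.

Definition no_common_factor3 (P Q : poly3 R) : Prop :=
  forall f : poly3 R, divides3 f P -> divides3 f Q -> f \is a GRing.unit.

Definition irreducible3 (P : poly3 R) : Prop :=
  P != 0 /\ P \isn't a GRing.unit /\
  forall f g : poly3 R, P = f * g -> f \is a GRing.unit \/ g \is a GRing.unit.

Definition zero_free_D3 (P : poly3 R) : Prop :=
  forall z1 z2 z3 : C, nrm z1 < 1 -> nrm z2 < 1 -> nrm z3 < 1 ->
    eval3 P z1 z2 z3 != 0.

Definition ratfun3 (P Pt : poly3 R) (z1 z2 z3 : C) : C :=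
  eval3 Pt z1 z2 z3 / eval3 P z1 z2 z3.

Definition nrm3 (z1 z2 z3 : C) : R := Num.max (nrm z1) (Num.max (nrm z2) (nrm z3)).

Definition ntlim (f : C -> C -> C -> C) (t1 t2 t3 L : C) : Prop :=
  forall c : R, 0 < c -> forall eps : R, 0 < eps -> exists2 delta : R, 0 < delta &
    forall z1 z2 z3 : C, nrm z1 < 1 -> nrm z2 < 1 -> nrm z3 < 1 ->
      nrm3 (z1 - t1) (z2 - t2) (z3 - t3) < delta ->
      nrm3 (z1 - t1) (z2 - t2) (z3 - t3) <= c * (1 - nrm3 z1 z2 z3) ->
      nrm (f z1 z2 z3 - L) < eps.

End Defs.

(* Main.v *)
Require Import Defs.
From mathcomp Require Import all_boot all_order all_algebra.
From mathcomp Require Import reals.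
From mathcomp Require Import complex.
From mathcomp Require Import ring lra.
Import Order.TTheory GRing.Theory Num.Theory.
Local Open Scope ring_scope. Local Open Scope complex_scope.
Set Implicit Arguments. Unset Strict Implicit. Unset Printing Implicit Defensive.
Section Nrm.
Variable R : realType.
Local Notation C := R[i].
Implicit Types x y z : C.
Local Notation RE := (@complex.Re R).
Local Notation IM := (@complex.Im R).

Lemma nrm_ge0 z : 0 <= nrm z.
Proof. by case: z => a b; exact: sqrtr_ge0. Qed.
Lemma nrmM x y : nrm (x * y) = nrm x * nrm y.
Proof. exact: Normc.normcM. Qed.
Lemma nrmD x y : nrm (x + y) <= nrm x + nrm y.
Proof. exact: le_normcD. Qed.
Lemma nrmN x : nrm (- x) = nrm x.
Proof. exact: normcN. Qed.
Lemma nrm0 : nrm (0 : C) = 0.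
Proof. exact: Normc.normc0. Qed.
Lemma nrm1 : nrm (1 : C) = 1.
Proof. exact: Normc.normc1. Qed.
Lemma nrm_eq0 x : nrm x = 0 -> x = 0.
Proof. exact: Normc.eq0_normc. Qed.
Lemma nrmV x : nrm x^-1 = (nrm x)^-1.
Proof. exact: Normc.normcV. Qed.
Lemma nrmB x y : nrm (x - y) = nrm (y - x).
Proof. by rewrite -nrmN opprB. Qed.
Lemma nrmX x n : nrm (x ^+ n) = nrm x ^+ n.
Proof. by elim: n => [|n IH]; rewrite ?expr0 ?nrm1 // !exprS nrmM IH. Qed.
Lemma nrm_sq x : nrm x ^+ 2 = RE x ^+ 2 + IM x ^+ 2.
Proof. by case: x => a b /=; rewrite sqr_sqrtr // addr_ge0 // sqr_ge0. Qed.
Lemma nrmJ x : nrm (Num.conj x) = nrm x.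
Proof. by case: x => a b; rewrite /nrm /Normc.normc /= sqrrN. Qed.
Lemma nrmDB x y : nrm x - nrm y <= nrm (x + y).
Proof. have := nrmD (x + y) (- y); rewrite addrK nrmN; lra. Qed.
Lemma nrmBB x y : nrm x - nrm y <= nrm (x - y).
Proof. have := nrmDB x (- y); rewrite nrmN; lra. Qed.
Lemma Re_le x : RE x <= nrm x.
Proof. have := nrm_sq x; have := nrm_ge0 x; have := sqr_ge0 (IM x); nra. Qed.
Lemma Re_ge x : - nrm x <= RE x.
Proof. have := nrm_sq x; have := nrm_ge0 x; have := sqr_ge0 (IM x); nra. Qed.
Lemma nrm_real (r : R) : 0 <= r -> nrm r%:C = r.
Proof. move=> r0; rewrite /nrm /Normc.normc /= expr0n /= addr0 sqrtr_sqr ger0_norm //. Qed.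
Lemma mulJ x : x * Num.conj x = (nrm x ^+ 2)%:C.
Proof.
case: x => a b; rewrite nrm_sq /=. apply/eqP; rewrite eq_complex /=; apply/andP; split; apply/eqP; ring.
Qed.
Lemma unit_conj (t : C) : nrm t = 1 -> Num.conj t = t^-1.
Proof.
move=> h; have t0 : t != 0 by apply/eqP => t0; move: h; rewrite t0 nrm0; lra.
apply: (mulfI t0); rewrite mulJ h expr1n divff //.
Qed.
Lemma unit_neq0 (t : C) : nrm t = 1 -> t != 0.
Proof. by move=> h; apply/eqP => t0; move: h; rewrite t0 nrm0; lra. Qed.
Lemma ReJ x y : RE (x * Num.conj y) = RE x * RE y + IM x * IM y.
Proof. case: x => a b; case: y => c d /=; ring. Qed.
Lemma nrm_subsq x y : nrm (x - y) ^+ 2 = nrm x ^+ 2 - 2 * RE (x * Num.conj y) + nrm y ^+ 2.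
Proof. rewrite !nrm_sq ReJ; case: x => a b; case: y => c d /=; ring. Qed.
End Nrm.
Section T1S.
Variable R : realType.
Local Notation C := R[i].

Definition sz (h1 h2 h3 : C) := nrm h1 + nrm h2 + nrm h3.
Definition lin (c1 c2 c3 h1 h2 h3 : C) := c1 * h1 + c2 * h2 + c3 * h3.
Definition T1 (r : R) (f : C -> C -> C -> C) (f0 c1 c2 c3 : C) :=
  exists2 K : R, 0 <= K & forall h1 h2 h3, nrm h1 <= r -> nrm h2 <= r -> nrm h3 <= r ->
    nrm (f h1 h2 h3 - (f0 + lin c1 c2 c3 h1 h2 h3)) <= K * sz h1 h2 h3 ^+ 2.

Lemma sz_ge0 h1 h2 h3 : 0 <= sz h1 h2 h3.
Proof. rewrite /sz; have := nrm_ge0 h1; have := nrm_ge0 h2; have := nrm_ge0 h3; lra. Qed.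

Lemma sz_le r h1 h2 h3 : nrm h1 <= r -> nrm h2 <= r -> nrm h3 <= r -> sz h1 h2 h3 <= 3 * r.
Proof. rewrite /sz; lra. Qed.

Lemma lin_bound c1 c2 c3 h1 h2 h3 :
  nrm (lin c1 c2 c3 h1 h2 h3) <= (nrm c1 + nrm c2 + nrm c3) * sz h1 h2 h3.
Proof.
rewrite /lin /sz.
have := nrmD (c1 * h1 + c2 * h2) (c3 * h3); have := nrmD (c1 * h1) (c2 * h2).
rewrite !nrmM.
have := nrm_ge0 h1; have := nrm_ge0 h2; have := nrm_ge0 h3.
have := nrm_ge0 c1; have := nrm_ge0 c2; have := nrm_ge0 c3.
nra.
Qed.

Lemma T1_eq r f f0 c1 c2 c3 g0 d1 d2 d3 :
  T1 r f f0 c1 c2 c3 -> f0 = g0 -> c1 = d1 -> c2 = d2 -> c3 = d3 -> T1 r f g0 d1 d2 d3.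
Proof. by move=> H <- <- <- <-. Qed.

Lemma T1_ext r f g f0 c1 c2 c3 :
  (forall h1 h2 h3, nrm h1 <= r -> nrm h2 <= r -> nrm h3 <= r -> f h1 h2 h3 = g h1 h2 h3) ->
  T1 r f f0 c1 c2 c3 -> T1 r g f0 c1 c2 c3.
Proof.
move=> E [K K0 H]; exists K => // h1 h2 h3 a b c; rewrite -E //; exact: H.
Qed.

Lemma T1_le r r' f f0 c1 c2 c3 : r' <= r -> T1 r f f0 c1 c2 c3 -> T1 r' f f0 c1 c2 c3.
Proof.
move=> rr [K K0 H]; exists K => // h1 h2 h3 a b c; apply: H; lra.
Qed.

Lemma T1_const r a : T1 r (fun _ _ _ => a) a 0 0 0.
Proof.
exists 0 => // h1 h2 h3 _ _ _; rewrite /lin !mul0r !addr0 subrr nrm0 ?mul0r; lra.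
Qed.

Lemma T1_X1 r : T1 r (fun h1 _ _ => h1) 0 1 0 0.
Proof.
exists 0 => // h1 h2 h3 _ _ _; rewrite /lin !mul0r !mul1r !addr0 add0r subrr nrm0 ?mul0r; lra.
Qed.
Lemma T1_X2 r : T1 r (fun _ h2 _ => h2) 0 0 1 0.
Proof.
exists 0 => // h1 h2 h3 _ _ _; rewrite /lin !mul0r !mul1r !addr0 !add0r subrr nrm0 ?mul0r; lra.
Qed.
Lemma T1_X3 r : T1 r (fun _ _ h3 => h3) 0 0 0 1.
Proof.
exists 0 => // h1 h2 h3 _ _ _; rewrite /lin !mul0r !mul1r !add0r subrr nrm0 ?mul0r; lra.
Qed.

Lemma T1_add r f g f0 c1 c2 c3 g0 d1 d2 d3 :
  T1 r f f0 c1 c2 c3 -> T1 r g g0 d1 d2 d3 ->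
  T1 r (fun h1 h2 h3 => f h1 h2 h3 + g h1 h2 h3) (f0 + g0) (c1 + d1) (c2 + d2) (c3 + d3).
Proof.
move=> [K K0 H] [L L0 G]; exists (K + L); first lra.
move=> h1 h2 h3 a b c.
have -> : f h1 h2 h3 + g h1 h2 h3 - (f0 + g0 + lin (c1 + d1) (c2 + d2) (c3 + d3) h1 h2 h3)
  = (f h1 h2 h3 - (f0 + lin c1 c2 c3 h1 h2 h3)) + (g h1 h2 h3 - (g0 + lin d1 d2 d3 h1 h2 h3)).
  rewrite /lin; ring.
apply: le_trans (nrmD _ _) _; have := H _ _ _ a b c; have := G _ _ _ a b c; lra.
Qed.

Lemma T1_scale r k f f0 c1 c2 c3 :
  T1 r f f0 c1 c2 c3 ->
  T1 r (fun h1 h2 h3 => k * f h1 h2 h3) (k * f0) (k * c1) (k * c2) (k * c3).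
Proof.
move=> [K K0 H]; exists (nrm k * K); first by apply: mulr_ge0 => //; exact: nrm_ge0.
move=> h1 h2 h3 a b c.
have -> : k * f h1 h2 h3 - (k * f0 + lin (k * c1) (k * c2) (k * c3) h1 h2 h3)
  = k * (f h1 h2 h3 - (f0 + lin c1 c2 c3 h1 h2 h3)) by rewrite /lin; ring.
rewrite nrmM -mulrA; apply: ler_wpM2l; [exact: nrm_ge0| exact: H].
Qed.

Lemma T1_bound r f f0 c1 c2 c3 : 0 <= r -> T1 r f f0 c1 c2 c3 ->
  exists2 M : R, 0 <= M & forall h1 h2 h3, nrm h1 <= r -> nrm h2 <= r -> nrm h3 <= r ->
    nrm (f h1 h2 h3 - f0) <= M * sz h1 h2 h3.
Proof.
move=> r0 [K K0 H]; exists (nrm c1 + nrm c2 + nrm c3 + K * (3 * r)).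
  have := nrm_ge0 c1; have := nrm_ge0 c2; have := nrm_ge0 c3; nra.
move=> h1 h2 h3 a b c.
have -> : f h1 h2 h3 - f0 = (f h1 h2 h3 - (f0 + lin c1 c2 c3 h1 h2 h3)) + lin c1 c2 c3 h1 h2 h3
  by ring.
apply: le_trans (nrmD _ _) _.
have := H _ _ _ a b c; have := lin_bound c1 c2 c3 h1 h2 h3.
have := sz_le a b c; have := sz_ge0 h1 h2 h3.
have := mulr_ge0 K0 (sz_ge0 h1 h2 h3).
set s := sz h1 h2 h3 => ks s0 s3r; rewrite expr2; nra.
Qed.

Lemma T1_mul r f g f0 c1 c2 c3 g0 d1 d2 d3 : 0 <= r ->
  T1 r f f0 c1 c2 c3 -> T1 r g g0 d1 d2 d3 ->
  T1 r (fun h1 h2 h3 => f h1 h2 h3 * g h1 h2 h3) (f0 * g0)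
     (f0 * d1 + g0 * c1) (f0 * d2 + g0 * c2) (f0 * d3 + g0 * c3).
Proof.
move=> r0 Hf Hg.
have [Mf Mf0 Bf] := T1_bound r0 Hf; have [Mg Mg0 Bg] := T1_bound r0 Hg.
case: Hf => [K K0 H]; case: Hg => [L L0 G].
exists (nrm f0 * L + nrm g0 * K + Mf * Mg).
  have := nrm_ge0 f0; have := nrm_ge0 g0; nra.
move=> h1 h2 h3 a b c.
have -> : f h1 h2 h3 * g h1 h2 h3 - (f0 * g0 + lin (f0 * d1 + g0 * c1) (f0 * d2 + g0 * c2) (f0 * d3 + g0 * c3) h1 h2 h3)
  = f0 * (g h1 h2 h3 - (g0 + lin d1 d2 d3 h1 h2 h3)) + g0 * (f h1 h2 h3 - (f0 + lin c1 c2 c3 h1 h2 h3))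
    + (f h1 h2 h3 - f0) * (g h1 h2 h3 - g0) by rewrite /lin; ring.
apply: le_trans (nrmD _ _) _.
apply: le_trans (lerD (nrmD _ _) (lexx _)) _.
rewrite !nrmM.
have := H _ _ _ a b c; have := G _ _ _ a b c; have := Bf _ _ _ a b c; have := Bg _ _ _ a b c.
have := nrm_ge0 f0; have := nrm_ge0 g0; have := sz_ge0 h1 h2 h3.
have := nrm_ge0 (f h1 h2 h3 - f0); have := nrm_ge0 (g h1 h2 h3 - g0).
set s := sz h1 h2 h3; set A := nrm (f h1 h2 h3 - (f0 + _)); set B := nrm (g h1 h2 h3 - (g0 + _)).
move=> *; nra.
Qed.

Lemma T1_zero r f c1 c2 c3 : T1 r f 0 c1 c2 c3 -> c1 = 0 -> c2 = 0 -> c3 = 0 ->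
  exists2 K : R, 0 <= K & forall h1 h2 h3, nrm h1 <= r -> nrm h2 <= r -> nrm h3 <= r ->
    nrm (f h1 h2 h3) <= K * sz h1 h2 h3 ^+ 2.
Proof.
move=> [K K0 H] e1 e2 e3; subst; exists K => // h1 h2 h3 a b c; have := H _ _ _ a b c.
by rewrite /lin !mul0r !addr0 subr0.
Qed.

End T1S.
Section Poly.
Variable R : realType.
Local Notation C := R[i].

Lemma T1_poly1 r (c : {poly C}) g g0 d1 d2 d3 : 0 <= r -> T1 r g g0 d1 d2 d3 ->
  exists e, T1 r (fun h1 h2 h3 => c.[g h1 h2 h3]) c.[g0] (e * d1) (e * d2) (e * d3).
Proof.
move=> r0 Hg; elim/poly_ind: c => [|q k [e IH]].
  by exists 0; apply: T1_eq (T1_ext _ (T1_const r 0)) _ _ _ _ => *; rewrite ?horner0 ?mul0r.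
exists (q.[g0] + g0 * e).
have H := T1_add (T1_mul r0 IH Hg) (T1_const r k).
apply: T1_eq (T1_ext _ H) _ _ _ _.
- by move=> *; rewrite hornerMXaddC.
- by rewrite hornerMXaddC.
all: ring.
Qed.

Lemma eval2_step (Q : poly2 R) (c : {poly C}) x y :
  eval2 (Q * 'X + c%:P) x y = eval2 Q x y * y + c.[x].
Proof. by rewrite /eval2 hornerMXaddC hornerD hornerM hornerC. Qed.

Lemma eval2_0 x y : eval2 (0 : poly2 R) x y = 0.
Proof. by rewrite /eval2 !horner0. Qed.

Lemma T1_poly2 r (P : poly2 R) g g0 d1 d2 d3 g' g0' d1' d2' d3' : 0 <= r ->
  T1 r g g0 d1 d2 d3 -> T1 r g' g0' d1' d2' d3' ->
  exists e e', T1 r (fun h1 h2 h3 => eval2 P (g h1 h2 h3) (g' h1 h2 h3)) (eval2 P g0 g0')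
     (e * d1 + e' * d1') (e * d2 + e' * d2') (e * d3 + e' * d3').
Proof.
move=> r0 Hg Hg'; elim/poly_ind: P => [|Q c [e [e' IH]]].
  by exists 0, 0; apply: T1_eq (T1_ext _ (T1_const r 0)) _ _ _ _ => *; rewrite ?eval2_0 ?mul0r ?addr0.
have [f Hc] := T1_poly1 c r0 Hg.
exists (eval2 Q g0 g0' * 0 + g0' * e + f), (eval2 Q g0 g0' + g0' * e').
have H := T1_add (T1_mul r0 IH Hg') Hc.
apply: T1_eq (T1_ext _ H) _ _ _ _.
- by move=> *; rewrite eval2_step.
- by rewrite eval2_step.
all: ring.
Qed.

Lemma T1_shift1 r (t : C) : T1 r (fun h1 _ _ => t + h1) t 1 0 0.
Proof. apply: T1_eq (T1_add (T1_const r t) (T1_X1 r)) _ _ _ _; ring. Qed.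
Lemma T1_shift2 r (t : C) : T1 r (fun _ h2 _ => t + h2) t 0 1 0.
Proof. apply: T1_eq (T1_add (T1_const r t) (T1_X2 r)) _ _ _ _; ring. Qed.
Lemma T1_shift3 r (t : C) : T1 r (fun _ _ h3 => t + h3) t 0 0 1.
Proof. apply: T1_eq (T1_add (T1_const r t) (T1_X3 r)) _ _ _ _; ring. Qed.

Lemma T1_eval2 r (P : poly2 R) t1 t2 : 0 <= r ->
  exists a1 a2, T1 r (fun h1 h2 _ => eval2 P (t1 + h1) (t2 + h2)) (eval2 P t1 t2) a1 a2 0.
Proof.
move=> r0; have [e [e' H]] := T1_poly2 P r0 (T1_shift1 r t1) (T1_shift2 r t2).
exists e, e'; apply: T1_eq H _ _ _ _; ring.
Qed.

End Poly.
Section Refl.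
Variable R : realType.
Local Notation C := R[i].

Lemma refl_k (t h : C) : nrm t = 1 -> nrm h <= 2^-1 ->
  let k := (Num.conj (t + h))^-1 - t in
  nrm k <= 2 * nrm h /\ nrm (k + t ^+ 2 * Num.conj h) <= 2 * nrm h ^+ 2.
Proof.
move=> t1 hs k.
have h2 : (2^-1 : R) = 1 - 2^-1 by field.
have zb : 2^-1 <= nrm (t + h) by have := nrmDB t h; rewrite t1; lra.
have z0 : Num.conj (t + h) != 0.
  apply/eqP => e; move: zb; rewrite -nrmJ e nrm0; lra.
have t0 := unit_neq0 t1.
have ke : k * Num.conj (t + h) = - (t * Num.conj h).
  rewrite /k mulrBl mulVf // rmorphD /= (unit_conj t1) mulrDr mulrV //; ring.
have nk : nrm k * nrm (t + h) = nrm h.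
  by rewrite -(nrmJ (t + h)) -nrmM ke nrmN nrmM t1 nrmJ mul1r.
have k0 := nrm_ge0 k; have h0 := nrm_ge0 h.
have kb : nrm k <= 2 * nrm h by nra.
split => //.
have -> : k + t ^+ 2 * Num.conj h = - (t * Num.conj h) * k.
  have e2 : k = - (t * Num.conj h) / Num.conj (t + h) by rewrite -ke mulfK.
  have e3 : (Num.conj (t + h))^-1 = k + t by rewrite /k subrK.
  rewrite {1}e2 e3; field.
  done.
rewrite nrmM nrmN nrmM t1 nrmJ mul1r; nra.
Qed.

Lemma T1_refl (t1 t2 : C) (F : C -> C -> C) (F0 a1 a2 : C) : nrm t1 = 1 -> nrm t2 = 1 ->
  T1 1 (fun h1 h2 _ => F (t1 + h1) (t2 + h2)) F0 a1 a2 0 ->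
  T1 (2^-1) (fun h1 h2 _ => Num.conj (F (Num.conj (t1 + h1))^-1 (Num.conj (t2 + h2))^-1))
     (Num.conj F0) (- Num.conj (a1 * t1 ^+ 2)) (- Num.conj (a2 * t2 ^+ 2)) 0.
Proof.
move=> n1 n2 [K K0 H].
exists (4 * K + 2 * (nrm a1 + nrm a2)).
  have := nrm_ge0 a1; have := nrm_ge0 a2; lra.
move=> h1 h2 h3 b1 b2 b3; cbv beta.
have [kb1 ke1] := refl_k n1 b1; have [kb2 ke2] := refl_k n2 b2.
set k1 := _ - t1 in kb1 ke1; set k2 := _ - t2 in kb2 ke2.
have kk1 : nrm k1 <= 1 by have := nrm_ge0 h1; lra.
have kk2 : nrm k2 <= 1 by have := nrm_ge0 h2; lra.
have := H k1 k2 0 kk1 kk2; rewrite nrm0 ler01 => /(_ isT).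
have ek1 : t1 + k1 = (Num.conj (t1 + h1))^-1 by rewrite /k1 addrC subrK.
have ek2 : t2 + k2 = (Num.conj (t2 + h2))^-1 by rewrite /k2 addrC subrK.
rewrite ek1 ek2 => HE.
set E := F _ _ - _ in HE.
have -> : Num.conj (F (Num.conj (t1 + h1))^-1 (Num.conj (t2 + h2))^-1) -
    (Num.conj F0 + lin (- Num.conj (a1 * t1 ^+ 2)) (- Num.conj (a2 * t2 ^+ 2)) 0 h1 h2 h3)
  = Num.conj (E + a1 * (k1 + t1 ^+ 2 * Num.conj h1) + a2 * (k2 + t2 ^+ 2 * Num.conj h2)).
  rewrite /E /lin -ek1 -ek2 !(rmorphD, rmorphN, rmorphB, rmorphM, rmorphXn, rmorph0, conjCK) /= !conjCK; ring.
rewrite nrmJ.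
apply: le_trans (nrmD _ _) _; apply: le_trans (lerD (nrmD _ _) (lexx _)) _.
rewrite !nrmM.
move: HE; rewrite /sz nrm0 addr0 => HE.
have := nrm_ge0 h1; have := nrm_ge0 h2; have := nrm_ge0 h3; have := nrm_ge0 k1; have := nrm_ge0 k2.
have := nrm_ge0 a1; have := nrm_ge0 a2.
set B1 := nrm (k1 + _) in ke1 *; set B2 := nrm (k2 + _) in ke2 *.
set x1 := nrm h1 in kb1 ke1 *; set x2 := nrm h2 in kb2 ke2 *; set x3 := nrm h3.
move=> a20 a10 k20 k10 x30 x20 x10.
set s := x1 + x2 + x3.
have s1 : (nrm k1 + nrm k2) ^+ 2 <= 4 * s ^+ 2.
  have : nrm k1 + nrm k2 <= 2 * s by rewrite /s; lra.
  have : 0 <= nrm k1 + nrm k2 by lra.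
  move=> *; nra.
have s2 : x1 ^+ 2 <= s ^+ 2 by rewrite /s; nra.
have s3 : x2 ^+ 2 <= s ^+ 2 by rewrite /s; nra.
have e1 : K * (nrm k1 + nrm k2) ^+ 2 <= 4 * K * s ^+ 2 by nra.
have e2 : nrm a1 * B1 <= 2 * nrm a1 * s ^+ 2 by nra.
have e3 : nrm a2 * B2 <= 2 * nrm a2 * s ^+ 2 by nra.
lra.
Qed.

End Refl.
Section Basic.
Variable R : realType.
Local Notation C := R[i].
Variables (m n : nat) (p pt : poly3 R) (p1 p2 pt2 : poly2 R).
Hypothesis Hpt : is_refl3 m n p pt.
Hypothesis Hzf : zero_free_D3 p.
Hypothesis Hdec : p = p1%:P + 'X * p2%:P.

Lemma eval3_p z1 z2 z3 : eval3 p z1 z2 z3 = eval2 p1 z1 z2 + z3 * eval2 p2 z1 z2.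
Proof.
by rewrite Hdec /eval3 /eval2 !hornerE /=.
Qed.

Lemma eval3_pt (z1 z2 z3 : C) : z1 != 0 -> z2 != 0 -> z3 != 0 ->
  eval3 pt z1 z2 z3 = z1 ^+ m * z2 ^+ n *
    (z3 * Num.conj (eval2 p1 (Num.conj z1)^-1 (Num.conj z2)^-1)
     + Num.conj (eval2 p2 (Num.conj z1)^-1 (Num.conj z2)^-1)).
Proof.
move=> a b c; rewrite Hpt // eval3_p rmorphD rmorphM rmorphV /= ?conjCK.
  by field.
by rewrite unitfE conjC_eq0.
Qed.

Lemma F1 (z1 z2 : C) : nrm z1 < 1 -> nrm z2 < 1 ->
  nrm (eval2 p2 z1 z2) <= nrm (eval2 p1 z1 z2).
Proof.
move=> a b; rewrite leNgt; apply/negP => lt.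
have b0 : eval2 p2 z1 z2 != 0.
  apply/eqP => e; move: lt; rewrite e nrm0; have := nrm_ge0 (eval2 p1 z1 z2); lra.
have := Hzf a b (z3 := - eval2 p1 z1 z2 / eval2 p2 z1 z2).
rewrite eval3_p divfK // subrr eqxx => H; suff: false by []; apply: H.
rewrite nrmM nrmN nrmV.
have := nrm_ge0 (eval2 p1 z1 z2); have := nrm_ge0 (eval2 p2 z1 z2).
move=> h0 h1; rewrite ltr_pdivrMr; lra.
Qed.

End Basic.
Section Align.
Variable R : realType.
Local Notation C := R[i].
Local Notation RE := (@complex.Re R).
Local Notation IM := (@complex.Im R).

Lemma RE_add (x y : C) : RE (x + y) = RE x + RE y. Proof. by case: x; case: y. Qed.
Lemma RE_scale (r : R) (x : C) : RE (r%:C * x) = r * RE x.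
Proof. by case: x => a b /=; ring. Qed.

Lemma small_lim (x B e0 : R) : 0 < e0 -> (forall e, 0 < e -> e <= e0 -> - x <= e * B) -> 0 <= x.
Proof.
move=> e00 H; rewrite leNgt; apply/negP => xn.
have B0 : 0 < B.
  have := H e0 e00 (lexx _); move=> h; rewrite ltNge; apply/negP => b0.
  have : e0 * B <= 0 by rewrite pmulr_rle0.
  lra.
pose e := Num.min e0 (- x / (2 * B)).
have e1 : e <= e0 by rewrite /e ge_min lexx.
have e2 : e <= - x / (2 * B) by rewrite /e ge_min lexx orbT.
have ep : 0 < e by rewrite /e lt_min e00 /= divr_gt0 //; lra.
have := H e ep e1.
have : e * B <= - x / (2 * B) * B by rewrite ler_pM2r.
have -> : - x / (2 * B) * B = - x / 2 by field; lra.
lra.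
Qed.

Lemma lin_lim (A Bc : R) : (forall s : R, 0 <= A - s * Bc) -> Bc = 0.
Proof.
move=> H; case: (eqVneq Bc 0) => // b0.
have := H ((`|A| + 1) / Bc).
rewrite divfK //.
have := ler_norm A; lra.
Qed.

Lemma align (t1 t2 : C) (Y U : C -> C -> C) (om c1 c2 : C) (K M : R) :
  nrm t1 = 1 -> nrm t2 = 1 -> 0 <= K -> 0 <= M ->
  (forall h1 h2, nrm h1 <= 2^-1 -> nrm h2 <= 2^-1 ->
     nrm (Y h1 h2 - (c1 * h1 + c2 * h2)) <= K * (nrm h1 + nrm h2) ^+ 2) ->
  (forall h1 h2, nrm h1 <= 2^-1 -> nrm h2 <= 2^-1 ->
     nrm (U h1 h2 - om) <= M * (nrm h1 + nrm h2)) ->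
  (forall h1 h2, nrm (t1 + h1) < 1 -> nrm (t2 + h2) < 1 ->
     nrm h1 <= 2^-1 -> nrm h2 <= 2^-1 ->
     2 * RE (Y h1 h2 * Num.conj (U h1 h2)) <= nrm (Y h1 h2) ^+ 2) ->
  IM (c1 * t1 * Num.conj om) = 0.
Proof.
move=> n1 n2 K0 M0 HY HU HF.
set x1 := c1 * t1 * Num.conj om; set x2 := c2 * t2 * Num.conj om.
apply: (@lin_lim (RE x1 + RE x2)) => s.
pose w : C := 1 +i* s.
have nw2 : nrm w ^+ 2 = 1 + s ^+ 2 by rewrite nrm_sq /= expr1n.
have W0 : 0 <= nrm w := nrm_ge0 w.
have W1 : 1 <= nrm w by have := sqr_ge0 s; nra.
set W := nrm w in nw2 W0 W1 *.
pose v := c1 * t1 * w + c2 * t2.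
have Rv : RE (v * Num.conj om) = RE x1 + RE x2 - s * IM x1.
  have -> : v * Num.conj om = x1 * w + x2 by rewrite /v /x1 /x2; ring.
  by rewrite /w /x1; case: (c1 * t1 * Num.conj om) => a b; case: x2 => c d /=; ring.
rewrite -Rv.
pose B := 2 * nrm v * M * (W + 1) + 2 * K * (W + 1) ^+ 2 * (nrm om + M * (W + 1))
          + (nrm v + K * (W + 1) ^+ 2) ^+ 2.
apply: (@small_lim _ (B / 2) (2^-1 / W ^+ 2)).
  by apply: divr_gt0; [lra | apply: exprn_gt0; lra].
move=> e e0 ee.
have eW : e * W ^+ 2 <= 2^-1.
  have W2 : 0 < W ^+ 2 by apply: exprn_gt0; lra.
  by move: ee; rewrite ler_pdivlMr //; lra.
have eW1 : e * W <= 2^-1 by nra.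
have e1 : e <= 2^-1 by nra.
pose h1 := - (e%:C * t1 * w); pose h2 := - (e%:C * t2).
have nh1 : nrm h1 = e * W by rewrite /h1 nrmN !nrmM n1 nrm_real ?mulr1 //; lra.
have nh2 : nrm h2 = e by rewrite /h2 nrmN !nrmM n2 nrm_real ?mulr1 //; lra.
have b1 : nrm h1 <= 2^-1 by lra.
have b2 : nrm h2 <= 2^-1 by lra.
have d1 : nrm (t1 + h1) < 1.
  have -> : t1 + h1 = t1 * (1 - e%:C * w) by rewrite /h1; ring.
  rewrite nrmM n1 mul1r.
  have q : nrm (1 - e%:C * w) ^+ 2 < 1.
    rewrite nrm_sq /w /=.
    have -> : (1 - (e * 1 - 0 * s)) ^+ 2 + (0 - (e * s + 0 * 1)) ^+ 2 = 1 - 2 * e + e ^+ 2 * W ^+ 2.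
      rewrite nw2; ring.
    nra.
  have := nrm_ge0 (1 - e%:C * w); nra.
have d2 : nrm (t2 + h2) < 1.
  have -> : t2 + h2 = t2 * (1 - e)%:C by rewrite /h2 rmorphB /=; ring.
  rewrite nrmM n2 mul1r nrm_real; lra.
have HF' := HF h1 h2 d1 d2 b1 b2.
have HY' := HY h1 h2 b1 b2; have HU' := HU h1 h2 b1 b2.
rewrite nh1 nh2 in HY' HU'.
set Yv := Y h1 h2 in HF' HY'; set Uv := U h1 h2 in HF' HU'.
have eL : c1 * h1 + c2 * h2 = - (e%:C * v) by rewrite /h1 /h2 /v; ring.
rewrite eL in HY'.
set E := Yv - _ in HY'; set D := Uv - om in HU'.
have eY : Yv = - (e%:C * v) + E by rewrite /E; ring.
have eU : Uv = om + D by rewrite /D; ring.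
have key : Yv * Num.conj Uv = (- e)%:C * (v * Num.conj om) + (- (e%:C * v) * Num.conj D + E * Num.conj Uv).
  rewrite /D rmorphB /= {1}eY rmorphN /=; ring.
rewrite key RE_add RE_scale in HF'.
have r1 := Re_ge (- (e%:C * v) * Num.conj D + E * Num.conj Uv).
have r2 : nrm (- (e%:C * v) * Num.conj D + E * Num.conj Uv) <= e * nrm v * nrm D + nrm E * nrm Uv.
  apply: le_trans (nrmD _ _) _; rewrite !nrmM nrmN nrmM !nrmJ nrm_real; lra.
have nY : nrm Yv <= e * nrm v + nrm E.
  rewrite eY; apply: le_trans (nrmD _ _) _; rewrite nrmN nrmM nrm_real; lra.
have nU : nrm Uv <= nrm om + nrm D.
  rewrite eU; exact: nrmD.
have EE := nrm_ge0 E; have DD := nrm_ge0 D; have VV := nrm_ge0 v; have OO := nrm_ge0 om.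
have UU := nrm_ge0 Uv; have YY := nrm_ge0 Yv.
have sE : nrm E <= e ^+ 2 * (K * (W + 1) ^+ 2).
  move: HY'; have -> : e * W + e = e * (W + 1) by ring.
  rewrite exprMn; lra.
have sD : nrm D <= e * (M * (W + 1)).
  move: HU'; have -> : e * W + e = e * (W + 1) by ring.
  lra.
have sU : nrm Uv <= nrm om + M * (W + 1).
  have : e * (M * (W + 1)) <= M * (W + 1).
    have : 0 <= M * (W + 1) by nra.
    nra.
  lra.
set KK := K * (W + 1) ^+ 2 in sE *; set MM := M * (W + 1) in sD sU *.
have KK0 : 0 <= KK by rewrite /KK; nra.
have MM0 : 0 <= MM by rewrite /MM; nra.
have t1' : nrm Yv ^+ 2 <= e ^+ 2 * (nrm v + KK) ^+ 2.
  have : nrm Yv <= e * (nrm v + KK) by nra.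
  nra.
have t2' : nrm E * nrm Uv <= e ^+ 2 * (KK * (nrm om + MM)) by nra.
have t3' : e * nrm v * nrm D <= e ^+ 2 * (nrm v * MM).
  have ev : 0 <= e * nrm v by apply: mulr_ge0 => //; lra.
  have := ler_wpM2l ev sD; rewrite expr2; lra.
rewrite /B -/KK -/MM.
set Q := (2 * nrm v * MM + 2 * KK * (nrm om + MM) + (nrm v + KK) ^+ 2).
set X := RE (v * Num.conj om) in HF' *.
have hh : e * (- X * 2) <= e * (e * Q).
  rewrite /Q; lra.
rewrite ler_pM2l // in hh.
apply: le_trans (_ : _ <= e * Q / 2) _; first lra.
rewrite [X in _ <= X](_ : _ = e * Q / 2) //; by rewrite /Q /MM /KK; field.
Qed.

End Align.
Section Main.
Variable R : realType.
Local Notation C := R[i].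
Variables (m n : nat) (p pt : poly3 R) (p1 p2 pt2 : poly2 R).
Hypothesis Hpt : is_refl3 m n p pt.
Hypothesis Hzf : zero_free_D3 p.
Hypothesis Hdec : p = p1%:P + 'X * p2%:P.
Variables (t1 t2 : C).
Hypotheses (n1 : nrm t1 = 1) (n2 : nrm t2 = 1).

Lemma nz_half (t h : C) : nrm t = 1 -> nrm h <= 2^-1 -> t + h != 0.
Proof.
move=> nt nh; apply/eqP => e; have := nrmDB t h; rewrite e nrm0 nt; lra.
Qed.

Lemma T1_N (s3 mu : C) : nrm s3 = 1 ->
  exists al1 al2 be1 be2 m1 m2 m3,
  [/\ T1 (2^-1) (fun h1 h2 _ => eval2 p1 (t1 + h1) (t2 + h2)) (eval2 p1 t1 t2) al1 al2 0,
      T1 (2^-1) (fun h1 h2 _ => eval2 p2 (t1 + h1) (t2 + h2)) (eval2 p2 t1 t2) be1 be2 0 &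
      let a := eval2 p1 t1 t2 in let b := eval2 p2 t1 t2 in let T := t1 ^+ m * t2 ^+ n in
      let X0 := s3 * Num.conj a + Num.conj b in let Y0 := a + s3 * b in
  T1 (2^-1) (fun h1 h2 h3 => eval3 pt (t1 + h1) (t2 + h2) (s3 + h3)
                             - mu * eval3 p (t1 + h1) (t2 + h2) (s3 + h3))
    (T * X0 - mu * Y0)
    (- T * (s3 * Num.conj (al1 * t1 ^+ 2) + Num.conj (be1 * t1 ^+ 2)) + X0 * m1 - mu * (al1 + s3 * be1))
    (- T * (s3 * Num.conj (al2 * t2 ^+ 2) + Num.conj (be2 * t2 ^+ 2)) + X0 * m2 - mu * (al2 + s3 * be2))
    (T * Num.conj a + X0 * m3 - mu * b)].
Proof.
move=> n3.
have h0 : (0 : R) <= 1 by lra.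
have hh : (2^-1 : R) <= 1 by lra.
have h2 : (0 : R) <= 2^-1 by lra.
have [al1 [al2 HA]] := T1_eval2 p1 t1 t2 h0.
have [be1 [be2 HB]] := T1_eval2 p2 t1 t2 h0.
have RA := T1_refl n1 n2 HA; have RB := T1_refl n1 n2 HB.
have HA' := T1_le hh HA; have HB' := T1_le hh HB.
have [m1 [m2 [m3 HM]]] : exists m1 m2 m3,
    T1 (2^-1) (fun h1 h2 _ => (t1 + h1) ^+ m * (t2 + h2) ^+ n) (t1 ^+ m * t2 ^+ n) m1 m2 m3.
  have [e1 E1] := T1_poly1 ('X^m) h2 (T1_shift1 (2^-1) t1).
  have [e2 E2] := T1_poly1 ('X^n) h2 (T1_shift2 (2^-1) t2).
  have E := T1_mul h2 E1 E2.
  suff: exists m1 m2 m3, T1 (2^-1) (fun h1 h2 _ => (t1 + h1) ^+ m * (t2 + h2) ^+ n)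
     ('X^m.[t1] * 'X^n.[t2]) m1 m2 m3 by rewrite !hornerXn.
  by do 3 eexists; apply: T1_ext E => * /=; rewrite !hornerXn.
have HX := T1_add (T1_mul h2 (T1_shift3 (2^-1) s3) RA) RB.
have HY := T1_add HA' (T1_mul h2 (T1_shift3 (2^-1) s3) HB').
have HN := T1_add (T1_mul h2 HM HX) (T1_scale (- mu) HY).
exists al1, al2, be1, be2, m1, m2, m3; split => //.
move=> a b T X0 Y0.
apply: T1_eq (T1_ext _ HN) _ _ _ _.
- move=> h1' h2' h3' b1 b2 b3 /=.
  rewrite (eval3_pt Hpt Hdec) ?nz_half // (eval3_p Hdec); ring.
all: rewrite /X0 /Y0 /T /a /b; ring.
Qed.

End Main.
Section NT.
Variable R : realType.
Local Notation C := R[i].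

Lemma nrm3_1 (a b c : C) : nrm a <= nrm3 a b c.
Proof. by rewrite /nrm3 le_max lexx. Qed.
Lemma nrm3_2 (a b c : C) : nrm b <= nrm3 a b c.
Proof. by rewrite /nrm3 !le_max lexx orbT. Qed.
Lemma nrm3_3 (a b c : C) : nrm c <= nrm3 a b c.
Proof. by rewrite /nrm3 !le_max lexx !orbT. Qed.
Lemma nrm3_lt1 (a b c : C) : nrm a < 1 -> nrm b < 1 -> nrm c < 1 -> nrm3 a b c < 1.
Proof. by move=> *; rewrite /nrm3 !gt_max; apply/and3P. Qed.

Lemma ntlim_crit (f : C -> C -> C -> C) (t1 t2 t3 L : C) (rho K beta : R) :
  0 < rho -> 0 <= K -> 0 < beta ->
  (forall z1 z2 z3, nrm z1 < 1 -> nrm z2 < 1 -> nrm z3 < 1 ->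
     nrm (z1 - t1) <= rho -> nrm (z2 - t2) <= rho -> nrm (z3 - t3) <= rho ->
     (nrm (f z1 z2 z3 - L) * (beta * (1 - nrm3 z1 z2 z3))
        <= K * sz (z1 - t1) (z2 - t2) (z3 - t3) ^+ 2)
     \/ (nrm (f z1 z2 z3 - L) * beta <= K * sz (z1 - t1) (z2 - t2) (z3 - t3))) ->
  ntlim f t1 t2 t3 L.
Proof.
move=> r0 K0 b0 Hb c c0 eps e0.
pose Q := 9 * (K + 1) * (c + 1).
have Q0 : 0 < Q by rewrite /Q; nra.
pose d := Num.min rho (eps * beta / Q).
have dr : d <= rho by rewrite /d ge_min lexx.
have de : d <= eps * beta / Q by rewrite /d ge_min lexx orbT.
have d0 : 0 < d by rewrite /d lt_min r0 /= !divr_gt0 // mulr_gt0.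
have dQ : d * Q <= eps * beta by rewrite -ler_pdivlMr.
exists d => // z1 z2 z3 a1 a2 a3 hd hc.
set H := nrm3 _ _ _ in hd hc.
have i1 := nrm3_1 (z1 - t1) (z2 - t2) (z3 - t3).
have i2 := nrm3_2 (z1 - t1) (z2 - t2) (z3 - t3).
have i3 := nrm3_3 (z1 - t1) (z2 - t2) (z3 - t3).
rewrite -/H in i1 i2 i3.
have szb : sz (z1 - t1) (z2 - t2) (z3 - t3) <= 3 * H by rewrite /sz; lra.
have sz0 := sz_ge0 (z1 - t1) (z2 - t2) (z3 - t3).
set S := sz _ _ _ in szb sz0 Hb.
have H0 : 0 <= H by have := nrm_ge0 (z1 - t1); lra.
have Z := nrm3_lt1 a1 a2 a3; set Nz := nrm3 z1 z2 z3 in Z hc Hb.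
have F0 := nrm_ge0 (f z1 z2 z3 - L); set FL := nrm (f z1 z2 z3 - L) in F0 Hb *.
have := Hb z1 z2 z3 a1 a2 a3 ltac:(lra) ltac:(lra) ltac:(lra).
have Qd : Q * H < eps * beta.
  have : Q * H < Q * d by rewrite ltr_pM2l.
  lra.
case => hb.
- (* FL * beta * (1 - Nz) <= K S^2 <= 9 K H * c (1 - Nz) *)
  have s2 : S ^+ 2 <= 9 * (H * (c * (1 - Nz))).
    have : S ^+ 2 <= 9 * H ^+ 2 by nra.
    have : H ^+ 2 <= H * (c * (1 - Nz)) by rewrite expr2; apply: ler_wpM2l.
    lra.
  have : FL * beta * (1 - Nz) <= (9 * K * H * c) * (1 - Nz).
    have := ler_wpM2l K0 s2.
    have hb' : FL * (beta * (1 - Nz)) <= K * S ^+ 2 := hb.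
    lra.
  rewrite ler_pM2r; last lra.
  move=> hh.
  have : FL * beta < eps * beta.
    apply: le_lt_trans hh _; apply: le_lt_trans Qd; rewrite /Q; nra.
  by rewrite ltr_pM2r.
- have hb' : FL * beta <= K * S := hb.
  have : FL * beta < eps * beta.
    apply: le_lt_trans hb' _; apply: le_lt_trans Qd; rewrite /Q.
    have := ler_wpM2l K0 szb; have := mulr_ge0 (mulr_ge0 K0 (ltW c0)) H0.
    have := mulr_ge0 K0 H0; have := mulr_ge0 (ltW c0) H0; lra.
  by rewrite ltr_pM2r.
Qed.

End NT.
Section Uniq.
Variable R : realType.
Local Notation C := R[i].

Lemma nrm3_same (x : C) : nrm3 x x x = nrm x.
Proof. by rewrite /nrm3 !maxxx. Qed.

Lemma ntlim_uniq (f : C -> C -> C -> C) (t1 t2 t3 L1 L2 : C) :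
  nrm t1 = 1 -> nrm t2 = 1 -> nrm t3 = 1 ->
  ntlim f t1 t2 t3 L1 -> ntlim f t1 t2 t3 L2 -> L1 = L2.
Proof.
move=> n1 n2 n3 H1 H2.
suff : nrm (L1 - L2) = 0 by move/nrm_eq0/eqP; rewrite subr_eq0 => /eqP.
apply/eqP; rewrite eq_le nrm_ge0 andbT leNgt; apply/negP => pos.
pose eps := nrm (L1 - L2) / 4.
have e0 : 0 < eps by rewrite /eps; lra.
have [d1 d10 D1] := H1 1 ltr01 eps e0.
have [d2 d20 D2] := H2 1 ltr01 eps e0.
pose d := Num.min 1 (Num.min d1 d2).
have d0 : 0 < d by rewrite /d !lt_min ltr01 d10 d20.
have dd1 : d <= d1 by rewrite /d !ge_min lexx !orbT.
have dd2 : d <= d2 by rewrite /d !ge_min lexx !orbT.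
have d1' : d <= 1 by rewrite /d ge_min lexx.
pose r := 1 - d / 2.
have r0 : 0 <= r by rewrite /r; lra.
have nz : forall t : C, nrm t = 1 -> nrm (r%:C * t) < 1.
  by move=> t nt; rewrite nrmM nt nrm_real // /r; lra.
have nh : forall t : C, nrm t = 1 -> nrm (r%:C * t - t) = d / 2.
  move=> t nt; have -> : r%:C * t - t = - ((d / 2)%:C * t) by rewrite /r rmorphB /=; ring.
  by rewrite nrmN nrmM nt nrm_real ?mulr1 //; lra.
have nh' : forall t : C, nrm t = 1 -> nrm (r%:C * t - t) = nrm ((d / 2)%:C).
  by move=> t nt; rewrite nh // nrm_real //; lra.
have hz : forall t : C, nrm t = 1 -> nrm (r%:C * t) = r by move=> t nt; rewrite nrmM nt nrm_real ?mulr1.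
have N3 : nrm3 (r%:C * t1 - t1) (r%:C * t2 - t2) (r%:C * t3 - t3) = d / 2.
  by rewrite /nrm3 !nh // !maxxx.
have N3' : nrm3 (r%:C * t1) (r%:C * t2) (r%:C * t3) = r.
  by rewrite /nrm3 !hz // !maxxx.
have A1 := D1 _ _ _ (nz _ n1) (nz _ n2) (nz _ n3).
have A2 := D2 _ _ _ (nz _ n1) (nz _ n2) (nz _ n3).
rewrite N3 N3' in A1 A2.
have B1 := A1 ltac:(lra) ltac:(rewrite /r; lra).
have B2 := A2 ltac:(lra) ltac:(rewrite /r; lra).
have : nrm (L1 - L2) <= nrm (f (r%:C * t1) (r%:C * t2) (r%:C * t3) - L1)
                         + nrm (f (r%:C * t1) (r%:C * t2) (r%:C * t3) - L2).
  rewrite (nrmB (f _ _ _) L1); apply: le_trans (nrmD _ _); rewrite [X in nrm X <= _](_ : _ = (L1 - f (r%:C * t1) (r%:C * t2) (r%:C * t3)) + (f (r%:C * t1) (r%:C * t2) (r%:C * t3) - L2)) //; ring.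
rewrite /eps in B1 B2 => h; have : False by lra.
done.
Qed.

End Uniq.
Section Lim.
Variable R : realType.
Local Notation C := R[i].
Local Notation RE := (@complex.Re R).
Local Notation IM := (@complex.Im R).
Variables (m n : nat) (p pt : poly3 R) (p1 p2 : poly2 R).
Hypothesis Hpt : is_refl3 m n p pt.
Hypothesis Hzf : zero_free_D3 p.
Hypothesis Hdec : p = p1%:P + 'X * p2%:P.
Variables (t1 t2 t3 : C).
Hypotheses (n1 : nrm t1 = 1) (n2 : nrm t2 = 1) (n3 : nrm t3 = 1).
Hypothesis hb0 : eval2 p2 t1 t2 != 0.
Hypothesis ha : eval2 p1 t1 t2 = - t3 * eval2 p2 t1 t2.

Lemma IM0_conj (x : C) : IM x = 0 -> Num.conj x = x.
Proof.
case: x => u v /= ->; have -> : Num.conj (u +i* 0) = conjc (u +i* 0) by [].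
by rewrite /conjc oppr0.
Qed.

Lemma align2 (al1 al2 be1 be2 : C) :
  T1 (2^-1) (fun h1 h2 _ => eval2 p1 (t1 + h1) (t2 + h2)) (eval2 p1 t1 t2) al1 al2 0 ->
  T1 (2^-1) (fun h1 h2 _ => eval2 p2 (t1 + h1) (t2 + h2)) (eval2 p2 t1 t2) be1 be2 0 ->
  IM ((al1 + t3 * be1) * t1 * Num.conj (t3 * eval2 p2 t1 t2)) = 0 /\
  IM ((al2 + t3 * be2) * t2 * Num.conj (t3 * eval2 p2 t1 t2)) = 0.
Proof.
move=> HA HB.
have h2 : (0 : R) <= 2^-1 by lra.
have [KY KY0 BY] := T1_add HA (T1_scale t3 HB).
have [MU MU0 BU] := T1_bound h2 (T1_scale t3 HB).
set b := eval2 p2 t1 t2 in BY BU *.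
have z0 : nrm (0 : C) <= 2^-1 by rewrite nrm0.
have hY : forall h1 h2, nrm h1 <= 2^-1 -> nrm h2 <= 2^-1 ->
   nrm (eval2 p1 (t1 + h1) (t2 + h2) + t3 * eval2 p2 (t1 + h1) (t2 + h2)
        - ((al1 + t3 * be1) * h1 + (al2 + t3 * be2) * h2)) <= KY * (nrm h1 + nrm h2) ^+ 2.
  move=> h1 h2' b1 b2; have := BY h1 h2' 0 b1 b2 z0.
  rewrite /sz nrm0 addr0 /lin ha; rewrite -/b.
  have -> : - t3 * b + t3 * b + ((al1 + t3 * be1) * h1 + (al2 + t3 * be2) * h2' + (0 + t3 * 0) * 0)
     = (al1 + t3 * be1) * h1 + (al2 + t3 * be2) * h2' by ring.
  done.
have hU : forall h1 h2, nrm h1 <= 2^-1 -> nrm h2 <= 2^-1 ->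
   nrm (t3 * eval2 p2 (t1 + h1) (t2 + h2) - t3 * b) <= MU * (nrm h1 + nrm h2).
  move=> h1 h2' b1 b2; have := BU h1 h2' 0 b1 b2 z0.
  by rewrite /sz nrm0 addr0.
have hF : forall z1 z2, nrm z1 < 1 -> nrm z2 < 1 ->
   2 * RE ((eval2 p1 z1 z2 + t3 * eval2 p2 z1 z2) * Num.conj (t3 * eval2 p2 z1 z2))
     <= nrm (eval2 p1 z1 z2 + t3 * eval2 p2 z1 z2) ^+ 2.
  move=> z1 z2 a1 a2; have := F1 Hzf Hdec a1 a2.
  have := nrm_subsq (eval2 p1 z1 z2 + t3 * eval2 p2 z1 z2) (t3 * eval2 p2 z1 z2).
  rewrite addrK nrmM n3 mul1r.
  have := nrm_ge0 (eval2 p2 z1 z2); have := nrm_ge0 (eval2 p1 z1 z2).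
  move=> *; nra.
split.
- apply: (align n1 n2 KY0 MU0 hY hU) => h1 h2' a1 a2 _ _; exact: hF.
- have hY' : forall h1 h2, nrm h1 <= 2^-1 -> nrm h2 <= 2^-1 ->
     nrm (eval2 p1 (t1 + h2) (t2 + h1) + t3 * eval2 p2 (t1 + h2) (t2 + h1)
        - ((al2 + t3 * be2) * h1 + (al1 + t3 * be1) * h2)) <= KY * (nrm h1 + nrm h2) ^+ 2.
    move=> h1 h2' b1 b2; have := hY h2' h1 b2 b1; rewrite (addrC (nrm h2')).
    by rewrite (addrC ((al1 + t3 * be1) * h2')).
  have hU' : forall h1 h2, nrm h1 <= 2^-1 -> nrm h2 <= 2^-1 ->
     nrm (t3 * eval2 p2 (t1 + h2) (t2 + h1) - t3 * b) <= MU * (nrm h1 + nrm h2).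
    by move=> h1 h2' b1 b2; have := hU h2' h1 b2 b1; rewrite (addrC (nrm h2')).
  apply: (align n2 n1 KY0 MU0 hY' hU') => h1 h2' a1 a2 _ _; exact: hF.
Qed.

Lemma rf_id (z1 z2 z3 mu : C) : nrm z1 < 1 -> nrm z2 < 1 -> nrm z3 < 1 ->
  nrm (ratfun3 p pt z1 z2 z3 - mu) * nrm (eval3 p z1 z2 z3)
  = nrm (eval3 pt z1 z2 z3 - mu * eval3 p z1 z2 z3).
Proof.
move=> a1 a2 a3; have p0 := Hzf a1 a2 a3.
by rewrite -nrmM; congr nrm; rewrite /ratfun3; field.
Qed.

Lemma limit_mu (s3 : C) : nrm s3 = 1 ->
  ntlim (ratfun3 p pt) t1 t2 s3
    (t1 ^+ m * t2 ^+ n * Num.conj (eval2 p2 t1 t2) / eval2 p1 t1 t2).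
Proof.
move=> n3s.
have h2 : (0 : R) <= 2^-1 by lra.
have t10 := unit_neq0 n1; have t20 := unit_neq0 n2; have t30 := unit_neq0 n3.
have a0 : eval2 p1 t1 t2 != 0 by rewrite ha mulNr oppr_eq0 mulf_neq0.
have [al1 [al2 [be1 [be2 [m1 [m2 [m3 [HA HB HN]]]]]]]] :=
  T1_N Hpt Hdec n1 n2 (t1 ^+ m * t2 ^+ n * Num.conj (eval2 p2 t1 t2) / eval2 p1 t1 t2) n3s.
cbv zeta in HN.
have ha' := ha; have hb' := hb0.
set a := eval2 p1 t1 t2 in a0 ha' HA HN *.
set b := eval2 p2 t1 t2 in ha' hb' HB HN *.
set T := t1 ^+ m * t2 ^+ n in HN *.
set mu := T * _ / a in HN *.
have cA : Num.conj a = - t3^-1 * Num.conj b.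
  by rewrite ha' !rmorphM rmorphN /= (unit_conj n3) mulNr.
have V0 : T * (s3 * Num.conj a + Num.conj b) - mu * (a + s3 * b) = 0.
  rewrite cA /mu ha'; field.
  by rewrite t30 hb'.
have HN0 := T1_eq HN V0 erefl erefl erefl.
have Hsh : forall x y : C, x + (y - x) = y := @subrKC _.
case: (eqVneq s3 t3) => [es | ne].
- subst s3.
  have [I1 I2] := align2 HA HB.
  have X00 : t3 * Num.conj a + Num.conj b = 0.
    rewrite cA; field; exact: t30.
  rewrite X00 !mul0r !addr0 in HN0.
  have J1 := IM0_conj I1; have J2 := IM0_conj I2.
  move: J1 J2; rewrite -/b.
  rewrite !(rmorphM, rmorphD, rmorphXn) /= !conjCK (unit_conj n1) (unit_conj n2) (unit_conj n3).
  move=> /eqP; rewrite -subr_eq0 => /eqP J1 /eqP; rewrite -subr_eq0 => /eqP J2.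
  have e1 : - T * (t3 * Num.conj (al1 * t1 ^+ 2) + Num.conj (be1 * t1 ^+ 2)) - mu * (al1 + t3 * be1) = 0.
    rewrite !(rmorphM, rmorphD, rmorphXn) /= (unit_conj n1) /mu ha'.
    match type of J1 with ?X = 0 =>
      transitivity (- T / (t1 * b) * X);
      [field; by rewrite t30 t10 hb' | by rewrite (_ : X = 0) ?mulr0] end.
  have e2 : - T * (t3 * Num.conj (al2 * t2 ^+ 2) + Num.conj (be2 * t2 ^+ 2)) - mu * (al2 + t3 * be2) = 0.
    rewrite !(rmorphM, rmorphD, rmorphXn) /= (unit_conj n2) /mu ha'.
    match type of J2 with ?X = 0 =>
      transitivity (- T / (t2 * b) * X);
      [field; by rewrite t30 t20 hb' | by rewrite (_ : X = 0) ?mulr0] end.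
  have e3 : T * Num.conj a - mu * b = 0.
    rewrite cA /mu ha'; field; by rewrite t30 hb'.
  have [K K0 BK] := T1_zero HN0 e1 e2 e3.
  have [M2 M20 B2] := T1_bound h2 HB.
  have bp : 0 < nrm b.
    rewrite lt_def nrm_ge0 andbT; apply/eqP => e; move/eqP: hb'; apply; exact: nrm_eq0.
  apply: (ntlim_crit (rho := Num.min 2^-1 (nrm b / (6 * (M2 + 1)))) (K := K) (beta := nrm b / 2)).
  + by rewrite lt_min; apply/andP; split; [lra | apply: divr_gt0 => //; lra].
  + exact: K0.
  + lra.
  move=> z1 z2 z3 a1 a2 a3 b1 b2 b3; left.
  have r1 : Num.min 2^-1 (nrm b / (6 * (M2 + 1))) <= 2^-1 by rewrite ge_min lexx.
  have r2 : Num.min 2^-1 (nrm b / (6 * (M2 + 1))) <= nrm b / (6 * (M2 + 1)) by rewrite ge_min lexx orbT.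
  set rho := Num.min _ _ in b1 b2 b3 r1 r2.
  have c1 : nrm (z1 - t1) <= 2^-1 by lra.
  have c2 : nrm (z2 - t2) <= 2^-1 by lra.
  have c3 : nrm (z3 - t3) <= 2^-1 by lra.
  have BK' := BK _ _ _ c1 c2 c3; have B2' := B2 _ _ _ c1 c2 c3.
  rewrite /= !Hsh in BK' B2'.
  have szb := sz_le b1 b2 b3.
  set S := sz _ _ _ in szb BK' B2' *.
  have S0 : 0 <= S := sz_ge0 _ _ _.
  have P2b : nrm b / 2 <= nrm (eval2 p2 z1 z2).
    have := nrmBB b (eval2 p2 z1 z2); rewrite nrmB.
    have : M2 * S <= nrm b / 2.
      have : M2 * S <= M2 * (3 * rho) by apply: ler_wpM2l.
      have : M2 * (3 * rho) <= nrm b / 2.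
        have : 3 * rho <= 3 * (nrm b / (6 * (M2 + 1))) by lra.
        have -> : 3 * (nrm b / (6 * (M2 + 1))) = (nrm b / 2) / (M2 + 1) by field; lra.
        rewrite ler_pdivlMr; last lra.
        move=> hh; have := ler_wpM2l M20 hh.
        have : 0 <= nrm b / 2 * M2 by apply: mulr_ge0 => //; lra.
        lra.
      lra.
    lra.
  have FF := F1 Hzf Hdec a1 a2.
  have i3 := nrm3_3 z1 z2 z3; have Z := nrm3_lt1 a1 a2 a3.
  have pz : nrm b / 2 * (1 - nrm3 z1 z2 z3) <= nrm (eval3 p z1 z2 z3).
    rewrite (eval3_p Hdec).
    have := nrmDB (eval2 p1 z1 z2) (z3 * eval2 p2 z1 z2); rewrite nrmM.
    have := nrm_ge0 (eval2 p2 z1 z2); have := nrm_ge0 z3.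
    have : nrm b / 2 * (1 - nrm3 z1 z2 z3) <= nrm (eval2 p2 z1 z2) * (1 - nrm z3).
      apply: ler_pM; lra.
    lra.
  have := rf_id mu a1 a2 a3.
  have := nrm_ge0 (ratfun3 p pt z1 z2 z3 - mu).
  set FL := nrm (ratfun3 p pt z1 z2 z3 - mu).
  move=> F0 E.
  have : FL * (nrm b / 2 * (1 - nrm3 z1 z2 z3)) <= FL * nrm (eval3 p z1 z2 z3) by apply: ler_wpM2l.
  lra.
- have [MN MN0 BN] := T1_bound h2 HN0.
  have HP := T1_add HA (T1_mul h2 (T1_shift3 (2^-1) s3) HB).
  have [Mp Mp0 BP] := T1_bound h2 HP.
  have d00 : a + s3 * b != 0.
    have -> : a + s3 * b = (s3 - t3) * b by rewrite ha'; ring.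
    by rewrite mulf_neq0 // subr_eq0.
  set d0 := nrm (a + s3 * b).
  have d0p : 0 < d0.
    rewrite /d0 lt_def nrm_ge0 andbT; apply/eqP => e; move/eqP: d00; apply; exact: nrm_eq0.
  apply: (ntlim_crit (rho := Num.min 2^-1 (d0 / (6 * (Mp + 1)))) (K := MN) (beta := d0 / 2)).
  + by rewrite lt_min; apply/andP; split; [lra | apply: divr_gt0 => //; lra].
  + exact: MN0.
  + lra.
  move=> z1 z2 z3 a1 a2 a3 b1 b2 b3; right.
  have r1 : Num.min 2^-1 (d0 / (6 * (Mp + 1))) <= 2^-1 by rewrite ge_min lexx.
  have r2 : Num.min 2^-1 (d0 / (6 * (Mp + 1))) <= d0 / (6 * (Mp + 1)) by rewrite ge_min lexx orbT.
  set rho := Num.min _ _ in b1 b2 b3 r1 r2.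
  have c1 : nrm (z1 - t1) <= 2^-1 by lra.
  have c2 : nrm (z2 - t2) <= 2^-1 by lra.
  have c3 : nrm (z3 - s3) <= 2^-1 by lra.
  have BN' := BN _ _ _ c1 c2 c3; have BP' := BP _ _ _ c1 c2 c3.
  rewrite /= !Hsh subr0 in BN' BP'.
  rewrite -(eval3_p Hdec) in BP'.
  have szb := sz_le b1 b2 b3.
  set S := sz _ _ _ in szb BN' BP' *.
  have S0 : 0 <= S := sz_ge0 _ _ _.
  have pz : d0 / 2 <= nrm (eval3 p z1 z2 z3).
    have := nrmBB (a + s3 * b) (eval3 p z1 z2 z3); rewrite nrmB -/d0.
    have : Mp * S <= d0 / 2.
      have : Mp * S <= Mp * (3 * rho) by apply: ler_wpM2l.
      have : Mp * (3 * rho) <= d0 / 2.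
        have : 3 * rho <= 3 * (d0 / (6 * (Mp + 1))) by lra.
        have -> : 3 * (d0 / (6 * (Mp + 1))) = (d0 / 2) / (Mp + 1) by field; lra.
        rewrite ler_pdivlMr; last lra.
        move=> hh; have := ler_wpM2l Mp0 hh.
        have : 0 <= d0 / 2 * Mp by apply: mulr_ge0 => //; lra.
        lra.
      lra.
    lra.
  have := rf_id mu a1 a2 a3.
  have := nrm_ge0 (ratfun3 p pt z1 z2 z3 - mu).
  set FL := nrm (ratfun3 p pt z1 z2 z3 - mu).
  move=> F0 E.
  have : FL * (d0 / 2) <= FL * nrm (eval3 p z1 z2 z3) by apply: ler_wpM2l.
  lra.
Qed.

End Lim.

Unset Implicit Arguments.
Local Close Scope complex_scope.

Lemma eval2_q (R : realType) (lam : R[i]) (p1 pt2 : poly2 R) z1 z2 :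
  eval2 ((lam%:P)%:P * p1 - pt2) z1 z2 = lam * eval2 p1 z1 z2 - eval2 pt2 z1 z2.
Proof. by rewrite /eval2 !hornerE. Qed.

Lemma two_neq0 (R : realType) : (2 : R[i]) != 0.
Proof. by rewrite pnatr_eq0. Qed.

Theorem lemma4p7 (R : realType) (m n : nat) (p pt : poly3 R)
  (p1 p2 pt2 : poly2 R)
  (* p has degree (m,n,1); pt = p~ is its reflection *)
  (Hdeg : deg_le3 m n 1 p)
  (Hpt : is_refl3 m n p pt)
  (* phi = pt/p is a rational inner function: p zero-free on D^3,
     p and pt without common factors; phi irreducible *)
  (Hzf : zero_free_D3 p)
  (Hcop : no_common_factor3 p pt)
  (Hirr : irreducible3 p)
  (* p(z) = p1(z1,z2) + z3 p2(z1,z2), pt2 = reflection of p2 at (m,n) *)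
  (Hdec : p = p1%:P + 'X * p2%:P)
  (Hpt2 : is_refl2 m n p2 pt2)
  (t1 t2 : R[i]) (Ht1 : nrm t1 = 1) (Ht2 : nrm t2 = 1) :
  ((exists! t3 : R[i], nrm t3 = 1 /\ eval3 p t1 t2 t3 = 0) ->
     forall lam : R[i], nrm lam = 1 ->
     forall t3' : R[i], nrm t3' = 1 ->
       (ntlim (ratfun3 p pt) t1 t2 t3' lam <->
        eval2 ((lam%:P)%:P * p1 - pt2) t1 t2 = 0))
  /\
  ((forall t3 : R[i], nrm t3 = 1 -> eval3 p t1 t2 t3 = 0) ->
     forall lam : R[i], nrm lam = 1 -> eval2 ((lam%:P)%:P * p1 - pt2) t1 t2 = 0).
Proof.
have t10 := unit_neq0 Ht1; have t20 := unit_neq0 Ht2.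
have Eq : forall lam : R[i], eval2 ((lam%:P)%:P * p1 - pt2) t1 t2
    = lam * eval2 p1 t1 t2 - t1 ^+ m * t2 ^+ n * Num.conj (eval2 p2 t1 t2).
  move=> lam; rewrite eval2_q Hpt2 // (unit_conj Ht1) (unit_conj Ht2) !invrK //.
have nm1 : nrm (-1 : R[i]) = 1 by rewrite nrmN nrm1.
split.
- move=> [t3 [[n3 z3] uniq]] lam nl t3' n3'.
  rewrite (eval3_p Hdec) in z3.
  have hb0 : eval2 p2 t1 t2 != 0.
    apply/eqP => b0; rewrite b0 mulr0 addr0 in z3.
    have e1 : t3 = 1 by apply: uniq; split; [exact: nrm1 | rewrite (eval3_p Hdec) z3 b0 mulr0 addr0].
    have e2 : t3 = -1 by apply: uniq; split; [exact: nm1 | rewrite (eval3_p Hdec) z3 b0 mulr0 addr0].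
    have : (2 : R[i]) = 0 by rewrite -[2]/(1 + 1) -{1}e1 e2 addNr.
    by move/eqP; rewrite (negbTE (two_neq0 R)).
  have ha : eval2 p1 t1 t2 = - t3 * eval2 p2 t1 t2.
    by apply/eqP; rewrite -subr_eq0 mulNr opprK z3.
  have a0 : eval2 p1 t1 t2 != 0 by rewrite ha mulNr oppr_eq0 mulf_neq0 // unit_neq0.
  have L := limit_mu Hpt Hzf Hdec Ht1 Ht2 n3 hb0 ha n3'.
  rewrite Eq; split.
  + move=> Hl; have -> := ntlim_uniq Ht1 Ht2 n3' Hl L.
    by rewrite divfK // subrr.
  + move/eqP; rewrite subr_eq0 => /eqP e.
    suff -> : lam = t1 ^+ m * t2 ^+ n * Num.conj (eval2 p2 t1 t2) / eval2 p1 t1 t2 by [].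
    by rewrite -e mulfK.
- move=> Hall lam nl.
  have e1 := Hall 1 (nrm1 R); have e2 := Hall (-1) nm1.
  rewrite !(eval3_p Hdec) in e1 e2.
  have b0 : eval2 p2 t1 t2 = 0.
    have : 2 * eval2 p2 t1 t2 = 0.
      have -> : 2 * eval2 p2 t1 t2 = (eval2 p1 t1 t2 + 1 * eval2 p2 t1 t2)
         - (eval2 p1 t1 t2 + (-1) * eval2 p2 t1 t2) by ring.
      by rewrite e1 e2 subrr.
    by move/eqP; rewrite mulf_eq0 (negbTE (two_neq0 R)) /= => /eqP.
  have a0 : eval2 p1 t1 t2 = 0 by move: e1; rewrite b0 mulr0 addr0.
  by rewrite Eq a0 b0 mulr0 rmorph0 mulr0 subrr.
Qed.
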